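(* Let $f:\mathbb{R}^d\to\mathbb{R}$ be convex, and suppose there exist $\boldsymbol x^\star\in\mathbb{R}^d$, $\rho>0$ and $r>0$ such that $f$ is twice differentiable on $B(\boldsymbol x^\star,r)$ with $\nabla^2f(\boldsymbol x)\succeq\rho\boldsymbol I$ for all $\boldsymbol x\in B(\boldsymbol x^\star,r)$. Then $$f(\boldsymbol x)\ge f(\boldsymbol x^\star)+\langle\nabla f(\boldsymbol x^\star),\boldsymbol x-\boldsymbol x^\star\rangle+\rho\,H(\|\boldsymbol x-\boldsymbol x^\star\|_2),\qquad\forall\boldsymbol x\in\mathbb{R}^d,$$ where $H(x)=x^2/2$ if $0\le x\le r$ and $H(x)=r(x-r/2)$ if $x>r$.
   Context: $B(\boldsymbol x,r)$ is the closed Euclidean ball. *)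

(* Defs.v *)
From HB Require Import structures.
From mathcomp Require Import all_boot all_order all_algebra.
From mathcomp Require Import all_classical all_reals all_analysis.
Set Implicit Arguments. Unset Strict Implicit. Unset Printing Implicit Defensive.
Import Order.TTheory GRing.Theory Num.Theory.
Import numFieldNormedType.Exports.
Local Open Scope classical_set_scope.
Local Open Scope ring_scope.

Section Defs.
Variables (R : realType) (d : nat).
Notation V := 'rV[R]_d.

Definition dotv (u v : V) : R := \sum_(i < d) u 0 i * v 0 i.
Definition norm2 (u : V) : R := Num.sqrt (dotv u u).

Definition cball2 (c : V) (r : R) : set V := [set x | norm2 (x - c) <= r].

Definition convex_fun (f : V -> R) : Prop :=
  forall (x y : V) (t : R), 0 <= t -> t <= 1 ->
    f (t *: x + (1 - t) *: y) <= t * f x + (1 - t) * f y.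

Definition ebasis (i : 'I_d) : V := delta_mx 0 i.

Definition grad (f : V -> R) (x : V) : V := \row_i ('d f x (ebasis i)).

Definition twice_differentiable_at (f : V -> R) (x : V) : Prop :=
  (\forall y \near x, differentiable f y) /\ differentiable (grad f) x.

(* Hessian matrix: hessian f x i j = d/dx_j (d f / dx_i) (x) *)
Definition hessian (f : V -> R) (x : V) : 'M[R]_d :=
  \matrix_(i, j) ('d (grad f) x (ebasis j)) 0 i.

Definition loewner_ge_scalar (A : 'M[R]_d) (rho : R) : Prop :=
  forall v : V, rho * dotv v v <= \sum_(i < d) \sum_(j < d) v 0 i * A i j * v 0 j.

Definition Hfun (r t : R) : R :=
  if t <= r then t ^+ 2 / 2 else r * (t - r / 2).
End Defs.

(* Main.v *)
Require Import Defs.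
From HB Require Import structures.
From mathcomp Require Import all_boot all_order all_algebra.
From mathcomp Require Import all_classical all_reals all_analysis.
From mathcomp Require Import ring lra.
Import Order.TTheory GRing.Theory Num.Theory.
Import numFieldNormedType.Exports.
Local Open Scope classical_set_scope.
Local Open Scope ring_scope.

Section Main.
Context {R : realType} {d : nat}.
Notation V := 'rV[R]_d.

Lemma is_derive_poly2 (F : R -> R) (F' t a b c : R) :
  is_derive t 1 F F' ->
  is_derive t 1 (fun s => F s + a * s + b * s ^+ 2 + c) (F' + a + b * (2 * t)).
Proof.
move=> dF.
have h1 : is_derive t (1:R) (a *: (@id R)) (a *: 1) by exact: is_deriveZ.
have h2 : is_derive t (1:R) (b *: ((@id R) ^+ 2)) (b *: ((2%:R * t ^+ 1) *: 1)).
  exact: is_deriveZ.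
have h3 := is_deriveD (is_deriveD (is_deriveD dF h1) h2) (is_derive_cst c t 1).
have -> : (fun s => F s + a * s + b * s ^+ 2 + c) = F + a *: (@id R) + b *: (@id R) ^+ 2 + cst c.
  by apply/funext => s /=; rewrite !fctE.
apply: is_derive_eq.
by rewrite addr0 expr1 [a%:A]mulr1 [(2 * t)%:A]mulr1.
Qed.

Lemma mono (F F' : R -> R) (a b : R) : a <= b ->
  (forall t : R, a <= t <= b -> is_derive t 1 F (F' t)) ->
  (forall t : R, a < t < b -> 0 <= F' t) -> F a <= F b.
Proof.
move=> ab dF F'ge.
have dF' t : t \in `[a, b] -> derivable F t 1.
  rewrite in_itv /= => /dF H; exact: ex_derive.
apply: (@ger0_derive1_le_cc _ F a b).
- move=> t; rewrite in_itv /= => /andP[? ?]; apply: dF'; rewrite in_itv /= !ltW //.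
- move=> t; rewrite in_itv /= => /andP[ha hb].
  have dFt : is_derive t 1 F (F' t) by apply: dF; rewrite !ltW.
  by rewrite derive1E derive_val; apply: F'ge; rewrite ha hb.
- exact: derivable_within_continuous.
- by rewrite in_itv /= lexx ab.
- by rewrite in_itv /= lexx ab.
- exact: ab.
Qed.

Lemma convex_tangent (g : R -> R) (a b : R) :
  (forall x y l : R, 0 <= l -> l <= 1 -> g (l * x + (1 - l) * y) <= l * g x + (1 - l) * g y) ->
  a < b -> derivable g a 1 -> g a + 'D_1 g a * (b - a) <= g b.
Proof.
move=> cvx ab dg.
rewrite -lerBrDl -ler_pdivlMr ?subr_gt0 //.
rewrite ['D_1 g a]cvg_at_rightE; last exact: dg.
apply: limr_le.
  rewrite -(cvg_at_rightE (fun h : R => h^-1 *: ((g \o shift a) _ - g a))) //.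
  apply: cvg_trans dg; apply: cvg_app.
  move=> A [e egt0 Ae]; exists e => // x xe xgt0; apply: Ae => //.
  exact/lt0r_neq0.
near=> h.
have h0 : 0 < h by near: h; exists 1 => /=.
have hb : h < b - a.
  near: h; exists (b - a); first by rewrite /= subr_gt0.
  by move=> h; rewrite /= distrC subr0 => /(le_lt_trans (ler_norm _)).
set l := h / (b - a).
have l0 : 0 <= l by rewrite divr_ge0 // ltW // subr_gt0.
have l1 : l <= 1 by rewrite ler_pdivrMr ?subr_gt0 // mul1r ltW.
have := cvx b a l l0 l1.
have -> : l * b + (1 - l) * a = h *: 1 + a.
  rewrite /l [_%:A]mulr1; field; by rewrite subr_eq0 gt_eqF.
move=> H /=.
rewrite [h%:A]mulr1 in H *.
change (h^-1 * (g (h + a) - g a) <= (g b - g a) / (b - a)).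
rewrite mulrC ler_pdivrMr //.
have -> : (g b - g a) / (b - a) * h = l * (g b - g a).
  by rewrite /l mulrC mulrA mulrAC.
lra.
Unshelve. all: by end_near.
Qed.

Lemma is_derive_line_p (xs w : V) (t : R) :
  is_derive t 1 (fun s : R => xs + s *: w) w.
Proof.
have h1 : is_derive t (1:R) (cst xs + ( *:%R ^~ w)) (0 + 1 *: w).
  apply: is_deriveD.
  apply: DeriveDef; first exact: diff_derivable.
  by rewrite deriveE // diff_val.
by rewrite add0r scale1r in h1.
Qed.

Lemma is_derive_line (W : normedModType R) (h : V -> W) (xs w : V) (t : R) :
  differentiable h (xs + t *: w) ->
  is_derive t 1 (fun s : R => h (xs + s *: w)) ('d h (xs + t *: w) w).
Proof.
move=> dh.
pose p := fun s : R => xs + s *: w.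
have dp := is_derive_line_p xs w t.
have pd : differentiable p t by apply/derivable1_diffP; exact: ex_derive.
have hd : differentiable (h \o p) t by apply: differentiable_comp.
apply: DeriveDef; first exact: diff_derivable.
rewrite (deriveE _ hd) diff_comp // /= -(deriveE _ pd).
by case: dp => _ ->.
Qed.

Lemma dotv_grad (f : V -> R) x w : dotv (grad f x) w = 'd f x w.
Proof.
rewrite [in RHS](row_sum_delta w) linear_sum /dotv.
apply: eq_bigr => i _; rewrite linearZ /= mxE /ebasis mulrC.
by [].
Qed.

Lemma hess_form (f : V -> R) (x v : V) :
  \sum_(i < d) \sum_(j < d) v 0 i * hessian f x i j * v 0 j =
  \sum_(i < d) v 0 i * ('d (grad f) x v) 0 i.
Proof.
apply: eq_bigr => i _.
rewrite [X in 'd _ _ X](row_sum_delta v) linear_sum summxE mulr_sumr.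
apply: eq_bigr => j _; rewrite linearZ /= !mxE /ebasis.
ring.
Qed.

Lemma dotvZ (t : R) (w : V) : dotv (t *: w) (t *: w) = t ^+ 2 * dotv w w.
Proof.
rewrite /dotv mulr_sumr; apply: eq_bigr => i _; rewrite !mxE; ring.
Qed.

Lemma dotv_ge0 (w : V) : 0 <= dotv w w.
Proof. by apply: sumr_ge0 => i _; rewrite -expr2 sqr_ge0. Qed.

Lemma norm2Z (t : R) (w : V) : 0 <= t -> norm2 (t *: w) = t * norm2 w.
Proof.
move=> t0; rewrite /norm2 dotvZ sqrtrM ?sqr_ge0 // sqrtr_sqr ger0_norm //.
Qed.

Lemma affine_comb (xs w : V) (y z l : R) :
  xs + (l * y + (1 - l) * z) *: w = l *: (xs + y *: w) + (1 - l) *: (xs + z *: w).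
Proof.
rewrite [in LHS]scalerDl !scalerDr !scalerA addrACA -[l *: xs + _]scalerDl.
by rewrite (_ : l + (1 - l) = 1) ?scale1r //; ring.
Qed.

End Main.

Theorem lemmaE5 (R : realType) (d : nat) (f : 'rV[R]_d -> R)
    (xs : 'rV[R]_d) (rho r : R) :
  convex_fun f -> 0 < rho -> 0 < r ->
  (forall x, cball2 xs r x -> twice_differentiable_at f x) ->
  (forall x, cball2 xs r x -> loewner_ge_scalar (hessian f x) rho) ->
  forall x : 'rV[R]_d,
    f xs + dotv (grad f xs) (x - xs) + rho * Hfun r (norm2 (x - xs)) <= f x.
Proof.
move=> cvx rho0 r0 td hs x.
set w := x - xs.
have xE : x = xs + 1 *: w by rewrite scale1r /w addrC subrK.
set q := dotv w w.
set s := norm2 w.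
have q0 : 0 <= q := dotv_ge0 w.
have sq : s ^+ 2 = q by rewrite /s /norm2 sqr_sqrtr.
have s0 : 0 <= s := sqrtr_ge0 _.
pose p := fun t : R => xs + t *: w.
pose g := fun t => f (p t).
pose G := fun t => dotv (grad f (p t)) w.
pose G' := fun t => \sum_(i < d) w 0 i * ('d (grad f) (p t) w) 0 i.
have inball t : 0 <= t -> t * s <= r -> cball2 xs r (p t).
  move=> t0 ts; rewrite /cball2 /= /p addrAC subrr add0r norm2Z //.
have dg t : 0 <= t -> t * s <= r -> is_derive t 1 g (G t).
  move=> t0 ts; have [nd _] := td _ (inball t t0 ts).
  have df : differentiable f (p t) := nbhs_singleton nd.
  rewrite /G dotv_grad; exact: is_derive_line.
have dG t : 0 <= t -> t * s <= r -> is_derive t 1 G (G' t).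
  move=> t0 ts; have [_ dgr] := td _ (inball t t0 ts).
  have dM := @is_derive_line R d _ _ xs w t dgr.
  have dMi i : is_derive t 1 (fun u => grad f (p u) 0 i) (('d (grad f) (p t) w) 0 i).
    have exM := @ex_derive _ _ _ _ _ _ _ dM.
    apply: DeriveDef.
      by move/derivable_mxP : exM => /(_ 0 i).
    by rewrite -(@derive_val _ _ _ _ _ _ _ dM) derive_mx // mxE.
  have -> : G = \sum_(i < d) (w 0 i *: (fun u => grad f (p u) 0 i)).
    apply/funext => u; rewrite /G /dotv fct_sumE; apply: eq_bigr => i _.
    by rewrite mulrC.
  exact: is_derive_sum (fun i => is_deriveZ (w 0 i) (dMi i)).
have G'ge t : 0 <= t -> t * s <= r -> rho * q <= G' t.
  by move=> t0 ts; have := hs _ (inball t t0 ts) w; rewrite hess_form.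
have g0 : g 0 = f xs by rewrite /g /p scale0r addr0.
have g1 : g 1 = f x by rewrite /g /p -xE.
have G0 : G 0 = dotv (grad f xs) w by rewrite /G /p scale0r addr0.
have gconv : forall y z l : R, 0 <= l -> l <= 1 ->
    g (l * y + (1 - l) * z) <= l * g y + (1 - l) * g z.
  move=> y z l l0 l1; rewrite /g /p.
  rewrite affine_comb.
  exact: cvx.
clearbody G' G g p.
have inI tau t : 0 <= tau -> tau * s <= r -> 0 <= t <= tau -> 0 <= t /\ t * s <= r.
  move=> ta ts /andP[t0 tt]; split => //.
  exact: le_trans (ler_wpM2r s0 tt) ts.
have step1 tau : 0 <= tau -> tau * s <= r -> G 0 + rho * q * tau <= G tau.
  move=> ta ts.
  have := @mono R (fun t => G t + (- (rho * q)) * t + 0 * t ^+ 2 + (- G 0))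
    (fun t => G' t + (- (rho * q)) + 0 * (2 * t)) 0 tau ta.
  have H1 : forall t : R, 0 <= t <= tau -> is_derive t 1
     (fun t => G t + (- (rho * q)) * t + 0 * t ^+ 2 + (- G 0))
     (G' t + (- (rho * q)) + 0 * (2 * t)).
    move=> t /(inI tau t ta ts) [t0 tts].
    exact: is_derive_poly2 (dG t t0 tts).
  move=> /(_ H1) H2.
  have : G 0 + - (rho * q) * 0 + 0 * 0 ^+ 2 + - G 0 <=
     G tau + - (rho * q) * tau + 0 * tau ^+ 2 + - G 0.
    apply: H2 => t /andP[t0 tt].
    have [|t0' tts] := inI tau t ta ts; first by rewrite !ltW.
    have := G'ge t t0' tts; lra.
  lra.
have step2 tau : 0 <= tau -> tau * s <= r ->
    g 0 + G 0 * tau + rho * q / 2 * tau ^+ 2 <= g tau.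
  move=> ta ts.
  have := @mono R (fun t => g t + (- G 0) * t + (- (rho * q / 2)) * t ^+ 2 + (- g 0))
    (fun t => G t + (- G 0) + (- (rho * q / 2)) * (2 * t)) 0 tau ta.
  have H1 : forall t : R, 0 <= t <= tau -> is_derive t 1
     (fun t => g t + (- G 0) * t + (- (rho * q / 2)) * t ^+ 2 + (- g 0))
     (G t + (- G 0) + (- (rho * q / 2)) * (2 * t)).
    move=> t /(inI tau t ta ts) [t0 tts].
    exact: is_derive_poly2 (dg t t0 tts).
  move=> /(_ H1) H2.
  have : g 0 + - G 0 * 0 + - (rho * q / 2) * 0 ^+ 2 + - g 0 <=
     g tau + - G 0 * tau + - (rho * q / 2) * tau ^+ 2 + - g 0.
    apply: H2 => t /andP[t0 tt].
    have [|t0' tts] := inI tau t ta ts; first by rewrite !ltW.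
    have := step1 t t0' tts; lra.
  lra.
rewrite /Hfun; case: ifPn => sr.
  have := step2 1 ler01; rewrite mul1r => /(_ sr).
  rewrite g0 g1 G0 -sq expr1n; lra.
rewrite -ltNge in sr.
have s0' : 0 < s := lt_trans r0 sr.
set tau := r / s.
have ta : 0 <= tau by rewrite divr_ge0 // ltW.
have tsr : tau * s = r by rewrite /tau divfK // gt_eqF.
have ts : tau * s <= r by rewrite tsr.
have t1 : tau < 1 by rewrite /tau ltr_pdivrMr // mul1r.
have dgt := dg tau ta ts.
have tang := @convex_tangent R g tau 1 gconv t1 (@ex_derive _ _ _ _ _ _ _ dgt).
rewrite (@derive_val _ _ _ _ _ _ _ dgt) g1 in tang.
have H1 := step1 tau ta ts.
have H2 := step2 tau ta ts.
rewrite g0 G0 in H1 H2.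
have H3 : (dotv (grad f xs) w + rho * q * tau) * (1 - tau) <= G tau * (1 - tau).
  by rewrite ler_wpM2r // subr_ge0 ltW.
have key : dotv (grad f xs) w * tau + rho * q / 2 * tau ^+ 2 +
    (dotv (grad f xs) w + rho * q * tau) * (1 - tau) =
    dotv (grad f xs) w + rho * (r * (s - r / 2)).
  rewrite /tau -sq; field; by rewrite gt_eqF.
lra.
Qed.
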